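(* There is a universal constant $C>0$ such that for all $d,k\ge1$ and all $\alpha\in(0,1]$, $\mathrm{fat}_\alpha(\mathcal{H}_{k,d})\le\frac{Ck^2}{\alpha^2}\log^3\!\big(\frac{ek}{\alpha}\big)$.
   Context: $\mathcal{X}=\{x\in[-1,1]^d:\|x\|_2\le1\}$, $\mathrm{clip}(z)=\max\{-1,\min\{1,z\}\}$, $\mathcal{H}_{k,d}=\{x\mapsto\mathrm{clip}(\sum_{j=1}^ka_j\max\{0,w^j\cdot x\}): a_j\in[-1,1],\|w^j\|_2\le1\}$. Sequential fat-shattering dimension: for $\mathcal{F}\subseteq\mathbb{R}^{\mathcal X}$ and $\alpha>0$, complete binary trees $(x_u)_{u\in\{0,1\}^{<m}}\subseteq\mathcal X$ and $(s_u)_{u\in\{0,1\}^{<m}}\subseteq\mathbb R$ are $\alpha$-shattered by $\mathcal F$ if for every $b\in\{0,1\}^m$ there is $f_b\in\mathcal F$ with, for all $t<m$, $f_b(x_{b_{\le t}})\ge s_{b_{\le t}}+\alpha$ if $b_{t+1}=1$ and $f_b(x_{b_{\le t}})\le s_{b_{\le t}}-\alpha$ if $b_{t+1}=0$; $\mathrm{fat}_\alpha(\mathcal F)$ is the supremum of such $m$ (0 if none, $\infty$ if unbounded). *)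

(* Defs.v *)
From Stdlib Require Import Reals List.
Open Scope R_scope.

(* Vectors of R^d are represented as functions nat -> R; only the
   coordinates 0..d-1 are ever used. *)
Definition vec := nat -> R.

Fixpoint fsum (n : nat) (g : nat -> R) : R :=
  match n with
  | O => 0
  | S n' => fsum n' g + g n'
  end.

Definition dot (d : nat) (w x : vec) : R := fsum d (fun j => w j * x j).
Definition norm2 (d : nat) (x : vec) : R := sqrt (fsum d (fun j => x j ^ 2)).

Definition inX (d : nat) (x : vec) : Prop :=
  (forall j, (j < d)%nat -> -1 <= x j <= 1) /\ norm2 d x <= 1.

Definition clip (z : R) : R := Rmax (-1) (Rmin 1 z).

Definition inH (k d : nat) (f : vec -> R) : Prop :=
  exists (a : nat -> R) (w : nat -> vec),
    (forall j, (j < k)%nat -> -1 <= a j <= 1 /\ norm2 d (w j) <= 1) /\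
    forall x, f x = clip (fsum k (fun j => a j * Rmax 0 (dot d (w j) x))).

(* Complete binary trees of depth m: nodes are indexed by bit-strings
   u in {0,1}^{<m} (lists of booleans of length < m).
   (xt, st) is alpha-shattered by F (of depth m). *)
Definition seq_shattered (d : nat) (F : (vec -> R) -> Prop) (alpha : R)
    (m : nat) (xt : list bool -> vec) (st : list bool -> R) : Prop :=
  (forall u : list bool, (length u < m)%nat -> inX d (xt u)) /\
  forall b : list bool, length b = m ->
    exists f, F f /\
      forall t, (t < m)%nat ->
        let u := firstn t b in
        if nth t b false then f (xt u) >= st u + alpha
        else f (xt u) <= st u - alpha.

(* fat_alpha(F) <= B  iff every depth m admitting an alpha-shattered
   tree satisfies m <= B (fat is the supremum of such m). *)
Definition fat_le (d : nat) (F : (vec -> R) -> Prop) (alpha B : R) : Prop :=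
  forall (m : nat) xt st, seq_shattered d F alpha m xt st -> INR m <= B.

(* Main.v *)
Require Import Defs.
From Stdlib Require Import Reals Lra Psatz List Lia.
From Stdlib Require Import Classical ClassicalEpsilon.
From Stdlib Require Import ZArith.
Import ListNotations.
Open Scope R_scope.

Lemma fsum_ext n f g : (forall j, (j < n)%nat -> f j = g j) -> fsum n f = fsum n g.
Proof. induction n; simpl; intros H; auto. rewrite IHn by (intros; apply H; lia). rewrite H by lia. auto. Qed.
Lemma fsum_plus n f g : fsum n (fun j => f j + g j) = fsum n f + fsum n g.
Proof. induction n; simpl; [lra|rewrite IHn; lra]. Qed.
Lemma fsum_scal n c f : fsum n (fun j => c * f j) = c * fsum n f.
Proof. induction n; simpl; [lra|rewrite IHn; lra]. Qed.
Lemma fsum_le n f g : (forall j, (j < n)%nat -> f j <= g j) -> fsum n f <= fsum n g.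
Proof. induction n; simpl; intros H; [lra|].
  assert (fsum n f <= fsum n g) by (apply IHn; intros; apply H; lia).
  specialize (H n ltac:(lia)). lra. Qed.
Lemma fsum_const n c : fsum n (fun _ => c) = INR n * c.
Proof. induction n; simpl fsum; [simpl; lra|]. rewrite IHn, S_INR. lra. Qed.
Lemma fsum_shift n g : fsum (S n) g = g O + fsum n (fun t => g (S t)).
Proof. induction n; simpl; [lra|]. simpl in IHn. rewrite IHn. lra. Qed.
Lemma fsum_swap n k (f : nat -> nat -> R) :
  fsum n (fun t => fsum k (fun j => f t j)) = fsum k (fun j => fsum n (fun t => f t j)).
Proof. induction n; simpl.
  - induction k; simpl; [lra| rewrite <- IHk; lra].
  - rewrite IHn. rewrite <- fsum_plus. auto. Qed.
Lemma fsum_nonneg n f : (forall j, (j < n)%nat -> 0 <= f j) -> 0 <= fsum n f.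
Proof. intros H. rewrite <- (Rmult_0_r (INR n)), <- fsum_const. apply fsum_le; auto. Qed.

Definition sq (d : nat) (x : vec) := fsum d (fun j => x j ^ 2).
Lemma norm2_sq d x : norm2 d x <= 1 -> sq d x <= 1.
Proof. unfold norm2, sq. intros H.
  assert (0 <= fsum d (fun j => x j ^ 2)) by (apply fsum_nonneg; intros; nra).
  destruct (Rle_dec (fsum d (fun j => x j ^ 2)) 1); auto.
  exfalso. assert (1 < sqrt (fsum d (fun j => x j ^ 2))).
  { rewrite <- sqrt_1. apply sqrt_lt_1; lra. } lra. Qed.
Lemma dot_bound d w x : sq d w <= 1 -> sq d x <= 1 -> Rabs (dot d w x) <= 1.
Proof. unfold sq, dot; intros Hw Hx.
  assert (A: fsum d (fun j => w j * x j) <= (fsum d (fun j => w j ^ 2) + fsum d (fun j => x j ^ 2))/2).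
  { rewrite <- fsum_plus. unfold Rdiv. rewrite (Rmult_comm _ (/2)), <- fsum_scal. apply fsum_le. intros; pose proof (pow2_ge_0 (w j - x j)); pose proof (pow2_ge_0 (w j + x j)); nra. }
  assert (B: - fsum d (fun j => w j * x j) <= (fsum d (fun j => w j ^ 2) + fsum d (fun j => x j ^ 2))/2).
  { rewrite <- fsum_plus. unfold Rdiv. rewrite (Rmult_comm _ (/2)), <- fsum_scal.
    replace (- fsum d (fun j => w j * x j)) with (-1 * fsum d (fun j => w j * x j)) by ring.
    rewrite <- fsum_scal. apply fsum_le. intros; pose proof (pow2_ge_0 (w j - x j)); pose proof (pow2_ge_0 (w j + x j)); nra. }
  apply Rabs_le; lra. Qed.
Lemma exp_le_exp x y : x <= y -> exp x <= exp y.
Proof. intros [H|H]; [left; apply exp_increasing; auto| subst; lra]. Qed.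
Lemma exp_le_inv x y : exp x <= exp y -> x <= y.
Proof. intros [H|H]; [left; apply exp_lt_inv; auto| right; apply exp_inv; auto]. Qed.
Lemma ln_le x y : 0 < x -> x <= y -> ln x <= ln y.
Proof. intros H [H1|H1]; [left; apply ln_increasing; auto| subst; lra]. Qed.
Lemma ln_le_id x : 0 < x -> ln x <= x - 1.
Proof. intros H. apply exp_le_inv. rewrite exp_ln by auto. pose proof (exp_ineq1_le (x - 1)). lra. Qed.
Lemma Rabs_le_inv a b : Rabs a <= b -> - b <= a <= b.
Proof. unfold Rabs; destruct Rcase_abs; intros; lra. Qed.
Definition eps (c : bool) : R := if c then 1 else -1.
Definition PS (m : nat) (v : list bool -> R) (b : list bool) : R :=
  fsum m (fun t => eps (nth t b false) * v (firstn t b)).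
Fixpoint AV (m : nat) (F : list bool -> R) : R :=
  match m with
  | O => F nil
  | S m' => (AV m' (fun b => F (true :: b)) + AV m' (fun b => F (false :: b))) / 2
  end.

Lemma AV_le m F G : (forall b, length b = m -> F b <= G b) -> AV m F <= AV m G.
Proof. revert F G; induction m; intros F G H; simpl.
  - apply H; auto.
  - assert (AV m (fun b => F (true :: b)) <= AV m (fun b => G (true :: b))) by (apply IHm; intros; apply H; simpl; auto).
    assert (AV m (fun b => F (false :: b)) <= AV m (fun b => G (false :: b))) by (apply IHm; intros; apply H; simpl; auto).
    lra. Qed.
Lemma AV_eq m F G : (forall b, length b = m -> F b = G b) -> AV m F = AV m G.
Proof. intros H; apply Rle_antisym; apply AV_le; intros; rewrite H; auto; lra. Qed.
Lemma AV_plus m F G : AV m (fun b => F b + G b) = AV m F + AV m G.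
Proof. revert F G; induction m; intros; simpl; auto. rewrite !IHm. lra. Qed.
Lemma AV_scal m c F : AV m (fun b => c * F b) = c * AV m F.
Proof. revert F; induction m; intros; simpl; auto. rewrite !IHm. lra. Qed.
Lemma AV_const m c : AV m (fun _ => c) = c.
Proof. induction m; simpl; auto. rewrite IHm. lra. Qed.
Lemma AV_fsum m k (F : nat -> list bool -> R) :
  AV m (fun b => fsum k (fun j => F j b)) = fsum k (fun j => AV m (F j)).
Proof. induction k; simpl. apply AV_const. rewrite AV_plus, IHk. auto. Qed.

Lemma PS_cons m v c b : PS (S m) v (c :: b) = eps c * v nil + PS m (fun u => v (c :: u)) b.
Proof. unfold PS. rewrite fsum_shift. simpl. auto. Qed.

Lemma AV_PS_zero m s : AV m (PS m s) = 0.
Proof. revert s; induction m; intros s; simpl. unfold PS; simpl; auto.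
  rewrite (AV_eq m (fun b => PS (S m) s (true :: b)) (fun b => eps true * s nil + PS m (fun u => s (true :: u)) b))
    by (intros; apply PS_cons).
  rewrite (AV_eq m (fun b => PS (S m) s (false :: b)) (fun b => eps false * s nil + PS m (fun u => s (false :: u)) b))
    by (intros; apply PS_cons).
  rewrite !AV_plus, !AV_const, !IHm. simpl. lra. Qed.

Lemma exp_ge_1pl x : 1 + x <= exp x. Proof. apply exp_ineq1_le. Qed.

Lemma cosh_bound x : (exp x + exp (- x)) / 2 <= exp (2 * x ^ 2).
Proof.
  destruct (Rle_dec (x^2) (1/2)).
  - assert (Hx : Rabs x < 1). { apply Rabs_def1; nra. }
    assert (A : exp x <= / (1 - x)).
    { pose proof (exp_ge_1pl (- x)). rewrite exp_Ropp in H.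
      assert (0 < exp x) by apply exp_pos. apply Rabs_def2 in Hx.
      apply (Rmult_le_reg_r (1 - x)); [lra|]. rewrite Rinv_l by lra.
      apply (Rmult_le_reg_r (/ exp x)); [apply Rinv_0_lt_compat; lra|].
      replace (exp x * (1 - x) * / exp x) with (1 - x) by (field; lra). lra. }
    assert (B : exp (- x) <= / (1 + x)).
    { pose proof (exp_ge_1pl x). rewrite exp_Ropp.
      assert (0 < exp x) by apply exp_pos. apply Rabs_def2 in Hx.
      apply Rinv_le_contravar; lra. }
    pose proof (exp_ge_1pl (2 * x ^ 2)). apply Rabs_def2 in Hx.
    assert (/ (1 - x) + / (1 + x) = 2 / (1 - x^2)) by (field; lra).
    assert (2 / (1 - x^2) <= 2 * (1 + 2 * x^2)).
    { apply (Rmult_le_reg_r (1 - x^2)); [nra|]. unfold Rdiv. rewrite Rmult_assoc, Rinv_l by nra. nra. }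
    lra.
  - assert (exp x <= exp (2 * x ^ 2)) by (apply exp_le_exp; nra).
    assert (exp (- x) <= exp (2 * x ^ 2)) by (apply exp_le_exp; nra). lra. Qed.

Lemma exp_moment m c lam v : (forall u, Rabs (v u) <= c) ->
  AV m (fun b => exp (lam * PS m v b)) <= exp (2 * lam ^ 2 * c ^ 2 * INR m).
Proof. revert v; induction m; intros v Hv.
  - simpl. unfold PS; simpl. rewrite Rmult_0_r, Rmult_0_r, exp_0. lra.
  - simpl AV.
    rewrite (AV_eq m (fun b => exp (lam * PS (S m) v (true :: b))) (fun b => exp (lam * v nil) * exp (lam * PS m (fun u => v (true :: u)) b)))
      by (intros; rewrite PS_cons, <- exp_plus; simpl; f_equal; ring).
    rewrite (AV_eq m (fun b => exp (lam * PS (S m) v (false :: b))) (fun b => exp (- (lam * v nil)) * exp (lam * PS m (fun u => v (false :: u)) b)))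
      by (intros; rewrite PS_cons, <- exp_plus; simpl; f_equal; ring).
    rewrite !AV_scal.
    pose proof (IHm (fun u => v (true :: u)) ltac:(intros; apply Hv)) as H1.
    pose proof (IHm (fun u => v (false :: u)) ltac:(intros; apply Hv)) as H2.
    pose proof (cosh_bound (lam * v nil)) as Hc.
    assert (exp (2 * (lam * v nil) ^ 2) <= exp (2 * lam ^ 2 * c ^ 2)).
    { apply exp_le_exp. specialize (Hv nil). assert (0 <= c) by (pose proof (Rabs_pos (v nil)); lra).
      assert (v nil ^ 2 <= c ^ 2). { rewrite <- (pow2_abs (v nil)). apply pow_incr; split; auto; apply Rabs_pos. }
      assert (0 <= lam^2) by apply pow2_ge_0. nra. }
    assert (E : exp (2 * lam ^ 2 * c ^ 2 * INR (S m)) = exp (2 * lam ^ 2 * c ^ 2) * exp (2 * lam ^ 2 * c ^ 2 * INR m)).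
    { rewrite <- exp_plus. f_equal. rewrite S_INR. ring. }
    rewrite E.
    pose proof (exp_pos (lam * v nil)). pose proof (exp_pos (- (lam * v nil))).
    pose proof (exp_pos (2 * lam ^ 2 * c ^ 2 * INR m)).
    apply Rle_trans with ((exp (lam * v nil) + exp (- (lam * v nil))) / 2 * exp (2 * lam ^ 2 * c ^ 2 * INR m)).
    + apply Rmult_le_compat_l with (r := exp (lam * v nil)) in H1; [|lra].
      apply Rmult_le_compat_l with (r := exp (- (lam * v nil))) in H2; [|lra]. lra.
    + apply Rmult_le_compat_r; [lra|]. lra. Qed.

Lemma exp_jensen m F : exp (AV m F) <= AV m (fun b => exp (F b)).
Proof. revert F; induction m; intros F; simpl. lra.
  pose proof (IHm (fun b => F (true :: b))). pose proof (IHm (fun b => F (false :: b))).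
  set (a := AV m (fun b => F (true :: b))) in *. set (c := AV m (fun b => F (false :: b))) in *.
  assert (exp ((a + c) / 2) <= (exp a + exp c) / 2).
  { replace a with (a/2 + a/2) at 2 by field. replace c with (c/2 + c/2) at 2 by field.
    replace ((a + c)/2) with (a/2 + c/2) by field. rewrite !exp_plus.
    pose proof (pow2_ge_0 (exp (a/2) - exp (c/2))). nra. }
  pose proof (AV_le m (fun b => exp (F (true :: b))) (fun b => exp (F (true :: b))) ltac:(intros; lra)).
  lra. Qed.
Section SumL.
Context {X : Type}.
Definition sumL (f : X -> R) (V : list X) : R := fold_right (fun v acc => f v + acc) 0 V.
Lemma sumL_nonneg f V : (forall v, In v V -> 0 <= f v) -> 0 <= sumL f V.
Proof. induction V; simpl; intros H; [lra|]. pose proof (H a (or_introl eq_refl)). pose proof (IHV (fun v h => H v (or_intror h))). lra. Qed.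
Lemma sumL_in f V v : (forall v, In v V -> 0 <= f v) -> In v V -> f v <= sumL f V.
Proof. induction V; simpl; intros H Hin; [destruct Hin|].
  pose proof (sumL_nonneg f V (fun v h => H v (or_intror h))).
  destruct Hin as [<-|Hin]. lra. pose proof (H a (or_introl eq_refl)). pose proof (IHV (fun v h => H v (or_intror h)) Hin). lra. Qed.
Lemma sumL_le f V B : (forall v, In v V -> f v <= B) -> sumL f V <= INR (length V) * B.
Proof. induction V; intros H; [simpl; lra|]. unfold sumL in *; cbn [fold_right length]. rewrite S_INR. pose proof (H a (or_introl eq_refl)). pose proof (IHV (fun v h => H v (or_intror h))). lra. Qed.
Lemma AV_sumL m (F : X -> list bool -> R) V : AV m (fun b => sumL (fun v => F v b) V) = sumL (fun v => AV m (F v)) V.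
Proof. induction V; simpl. apply AV_const. rewrite AV_plus, IHV. auto. Qed.
End SumL.

Lemma finite_class m c lam (V : list (list bool -> R)) (sel : list bool -> list bool -> R) :
  0 < lam -> (forall b, length b = m -> In (sel b) V) -> (forall v, In v V -> forall u, Rabs (v u) <= c) ->
  AV m (fun b => PS m (sel b) b) <= ln (INR (length V)) / lam + 2 * lam * c ^ 2 * INR m.
Proof.
  intros Hl Hsel Hc.
  set (S := fun b => sumL (fun v => exp (lam * PS m v b)) V).
  assert (HV : (0 < length V)%nat).
  { destruct V. destruct (Hsel (repeat false m) (repeat_length _ _)). simpl; lia. }
  assert (Spos : forall b, length b = m -> 0 < S b).
  { intros b Hb. apply Rlt_le_trans with (exp (lam * PS m (sel b) b)). apply exp_pos.
    apply (sumL_in (fun v => exp (lam * PS m v b))); [intros; left; apply exp_pos| apply Hsel; auto]. }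
  assert (H1 : AV m (fun b => PS m (sel b) b) <= AV m (fun b => / lam * ln (S b))).
  { apply AV_le. intros b Hb. apply (Rmult_le_reg_l lam); auto.
    rewrite <- Rmult_assoc, Rinv_r, Rmult_1_l by lra. apply exp_le_inv. rewrite exp_ln by auto.
    apply (sumL_in (fun v => exp (lam * PS m v b))); [intros; left; apply exp_pos| apply Hsel; auto]. }
  rewrite AV_scal in H1.
  assert (H2 : exp (AV m (fun b => ln (S b))) <= INR (length V) * exp (2 * lam ^ 2 * c ^ 2 * INR m)).
  { eapply Rle_trans. apply (exp_jensen m (fun b => ln (S b))). cbv beta.
    rewrite (AV_eq m (fun b => exp (ln (S b))) S) by (intros; apply exp_ln; auto).
    unfold S. rewrite AV_sumL. apply sumL_le. intros. apply exp_moment. apply Hc; auto. }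
  assert (0 < INR (length V)) by (apply lt_0_INR; auto).
  assert (H3 : AV m (fun b => ln (S b)) <= ln (INR (length V)) + 2 * lam ^ 2 * c ^ 2 * INR m).
  { apply exp_le_inv. rewrite exp_plus, exp_ln by auto. auto. }
  unfold Rdiv. eapply Rle_trans; [apply H1|].
  apply Rle_trans with (/ lam * (ln (INR (length V)) + 2 * lam ^ 2 * c ^ 2 * INR m)).
  apply Rmult_le_compat_l; [left; apply Rinv_0_lt_compat; auto| auto].
  right. field. lra. Qed.
Lemma choice_cid {A B : Type} (P : A -> B -> Prop) : (forall x, exists y, P x y) -> exists f, forall x, P x (f x).
Proof. intros H. exists (fun x => proj1_sig (constructive_indefinite_description _ (H x))).
  intros x. exact (proj2_sig (constructive_indefinite_description _ (H x))). Qed.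

Lemma fsum_tele L (a : nat -> R) : fsum L (fun i => a (S i) - a i) = a L - a O.
Proof. induction L; simpl; [lra| rewrite IHL; lra]. Qed.

Lemma PS_minus m f g b : PS m (fun u => f u - g u) b = PS m f b - PS m g b.
Proof. unfold PS. rewrite <- (Rmult_1_l (fsum m (fun t => eps (nth t b false) * g (firstn t b)))).
  replace (fsum m (fun t => eps (nth t b false) * f (firstn t b)) - 1 * fsum m (fun t => eps (nth t b false) * g (firstn t b)))
   with (fsum m (fun t => eps (nth t b false) * f (firstn t b)) + -1 * fsum m (fun t => eps (nth t b false) * g (firstn t b))) by ring.
  rewrite <- fsum_scal, <- fsum_plus. apply fsum_ext. intros; ring. Qed.

Lemma Rabs_eps c : Rabs (eps c) = 1.
Proof. destruct c; simpl; unfold Rabs; destruct Rcase_abs; lra. Qed.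

Lemma PS_bound m f b B : (forall t, (t < m)%nat -> Rabs (f (firstn t b)) <= B) -> PS m f b <= INR m * B.
Proof. intros H. unfold PS. rewrite <- fsum_const. apply fsum_le. intros j Hj.
  eapply Rle_trans; [apply Rle_abs|]. rewrite Rabs_mult, Rabs_eps, Rmult_1_l. auto. Qed.

Definition clipc (c z : R) := Rmax (- c) (Rmin c z).
Lemma clipc_bound c z : 0 <= c -> Rabs (clipc c z) <= c.
Proof. intros. unfold clipc, Rmax, Rmin. apply Rabs_le. repeat destruct Rle_dec; lra. Qed.
Lemma clipc_id c z : Rabs z <= c -> clipc c z = z.
Proof. intros H. apply Rabs_le_inv in H. unfold clipc, Rmax, Rmin. repeat destruct Rle_dec; lra. Qed.

Lemma pow_half_4 j : (/2) ^ j * (/2) ^ j * 4 ^ j = 1.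
Proof. induction j; simpl; [lra|]. replace (/ 2 * (/ 2) ^ j * (/ 2 * (/ 2) ^ j) * (4 * 4 ^ j)) with ((/ 2) ^ j * (/ 2) ^ j * 4 ^ j) by field. auto. Qed.

Definition V0 (Vs : nat -> list (list bool -> R)) (j : nat) : list (list bool -> R) :=
  match j with O => [fun _ => 0] | _ => Vs j end.

Lemma chaining m L (h : list bool -> list bool -> R) (Vs : nat -> list (list bool -> R)) (Lam : R) :
  (1 <= m)%nat -> 0 < Lam ->
  (forall b, length b = m -> forall t, (t < m)%nat -> Rabs (h b (firstn t b)) <= 1) ->
  (forall j, (1 <= j <= L)%nat -> forall b, length b = m -> exists v, In v (Vs j) /\
       forall t, (t < m)%nat -> Rabs (v (firstn t b) - h b (firstn t b)) <= (/2) ^ j) ->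
  (forall j, (1 <= j <= L)%nat -> ln (INR (length (Vs j))) <= 4 ^ (S j) * Lam) ->
  AV m (fun b => PS m (h b) b) <= INR m * (/2) ^ L + INR L * (26 * sqrt (Lam * INR m)).
Proof.
  intros Hm HLam Hh Hcov Hsize.
  assert (Hc : forall p : nat * list bool, exists v, (1 <= fst p <= L)%nat -> length (snd p) = m ->
     In v (Vs (fst p)) /\ forall t, (t < m)%nat -> Rabs (v (firstn t (snd p)) - h (snd p) (firstn t (snd p))) <= (/2) ^ (fst p)).
  { intros [j b]. simpl. destruct (classic ((1 <= j <= L)%nat /\ length b = m)) as [[H1 H2]|H].
    - destruct (Hcov j H1 b H2) as [v Hv]. exists v; auto.
    - exists (fun _ => 0). intros; tauto. }
  apply choice_cid in Hc. destruct Hc as [sel Hsel].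
  set (v := fun (j : nat) (b : list bool) => match j with O => (fun _ : list bool => 0) | _ => sel (j, b) end).
  assert (Hv : forall j b, (j <= L)%nat -> length b = m -> In (v j b) (V0 Vs j) /\
      forall t, (t < m)%nat -> Rabs (v j b (firstn t b) - h b (firstn t b)) <= (/2) ^ j).
  { intros j b Hj Hb. destruct j as [|j'].
    - unfold v; simpl. split; auto. intros. rewrite Rminus_0_l, Rabs_Ropp. apply Hh; auto.
    - simpl v. apply (Hsel (S j', b)); simpl; auto; lia. }
  assert (Hlen : forall j, (j <= L)%nat -> (0 < length (V0 Vs j))%nat).
  { intros j Hj. destruct (Hv j (repeat false m) Hj (repeat_length _ _)) as [Hi _].
    destruct (V0 Vs j); [destruct Hi| simpl; lia]. }
  assert (Hsz : forall j, (j <= L)%nat -> ln (INR (length (V0 Vs j))) <= 4 ^ (S j) * Lam).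
  { intros j Hj. destruct j. simpl. rewrite ln_1. nra. apply Hsize; lia. }
  set (s := sqrt (Lam * INR m)).
  assert (Hm' : 0 < INR m) by (apply lt_0_INR; lia).
  assert (Hs : 0 < s) by (apply sqrt_lt_R0; nra).
  assert (Hs2 : s * s = Lam * INR m) by (apply sqrt_sqrt; nra).
  set (D := fun (j : nat) (b : list bool) => fun u => clipc (3 * (/2) ^ (S j)) (v (S j) b u - v j b u)).
  assert (Hdec : forall b, length b = m -> PS m (h b) b =
     PS m (fun u => h b u - v L b u) b + fsum L (fun j => PS m (D j b) b)).
  { intros b Hb.
    assert (forall j, (j < L)%nat -> PS m (D j b) b = PS m (v (S j) b) b - PS m (v j b) b).
    { intros j Hj. rewrite <- PS_minus. unfold PS. apply fsum_ext. intros t Ht. f_equal. unfold D.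
      apply clipc_id. destruct (Hv (S j) b ltac:(lia) Hb) as [_ H1]. destruct (Hv j b ltac:(lia) Hb) as [_ H2].
      specialize (H1 t Ht). specialize (H2 t Ht).
      replace (v (S j) b (firstn t b) - v j b (firstn t b)) with
        ((v (S j) b (firstn t b) - h b (firstn t b)) - (v j b (firstn t b) - h b (firstn t b))) by ring.
      eapply Rle_trans; [apply Rabs_triang|]. rewrite Rabs_Ropp. simpl pow. simpl pow in H1. lra. }
    rewrite (fsum_ext L _ (fun j => PS m (v (S j) b) b - PS m (v j b) b)) by auto.
    pose proof (fsum_tele L (fun j => PS m (v j b) b)) as T. cbv beta in T. rewrite T, PS_minus. simpl v at 3. replace (PS m (fun _ : list bool => 0) b) with 0. ring.
    unfold PS. rewrite (fsum_ext m _ (fun _ => 0)) by (intros; ring). rewrite fsum_const. ring. }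
  rewrite (AV_eq m _ _ Hdec), AV_plus, AV_fsum.
  apply Rplus_le_compat.
  - rewrite <- (AV_const m (INR m * (/2) ^ L)). apply AV_le. intros b Hb. apply PS_bound.
    intros t Ht. destruct (Hv L b ltac:(lia) Hb) as [_ H]. rewrite <- Rabs_Ropp.
    replace (- (h b (firstn t b) - v L b (firstn t b))) with (v L b (firstn t b) - h b (firstn t b)) by ring. auto.
  - rewrite <- fsum_const. apply fsum_le. intros j Hj.
    set (W := map (fun p : (list bool -> R) * (list bool -> R) => fun u => clipc (3 * (/2) ^ (S j)) (fst p u - snd p u))
                  (list_prod (V0 Vs (S j)) (V0 Vs j))).
    set (lam := 4 ^ S j * (s / INR m)).
    assert (Hlam : 0 < lam) by (unfold lam; apply Rmult_lt_0_compat; [apply pow_lt; lra| apply Rdiv_lt_0_compat; lra]).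
    eapply Rle_trans.
    { apply (finite_class m (3 * (/2) ^ (S j)) lam W (D j) Hlam).
      - intros b Hb. unfold W, D. apply (in_map (fun p : (list bool -> R) * (list bool -> R) => fun u => clipc (3 * (/2) ^ (S j)) (fst p u - snd p u)) _ (v (S j) b, v j b)).
        apply in_prod; [apply (Hv (S j) b); auto; lia| apply (Hv j b); auto; lia].
      - intros w Hw u. unfold W in Hw. apply in_map_iff in Hw. destruct Hw as [p [<- _]]. apply clipc_bound.
        assert (0 < (/2) ^ S j) by (apply pow_lt; lra). lra. }
    unfold W. rewrite length_map, length_prod, mult_INR.
    pose proof (Hlen (S j) ltac:(lia)). pose proof (Hlen j ltac:(lia)).
    rewrite ln_mult by (apply lt_0_INR; auto).
    pose proof (Hsz (S j) ltac:(lia)). pose proof (Hsz j ltac:(lia)).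
    assert (Hp4 : 0 < 4 ^ S j) by (apply pow_lt; lra).
    assert (E4 : 4 ^ S (S j) = 4 * 4 ^ S j) by auto.
    assert (E4' : 4 ^ S j = 4 * 4 ^ j) by auto.
    assert (Hh4 : (/2) ^ S j * (/2) ^ S j * 4 ^ S j = 1) by apply pow_half_4.
    apply Rle_trans with (2 * 4 ^ S (S j) * Lam / lam + 2 * lam * (3 * (/ 2) ^ S j) ^ 2 * INR m).
    + apply Rplus_le_compat_r. unfold Rdiv. apply Rmult_le_compat_r; [left; apply Rinv_0_lt_compat; auto|].
      assert (0 < 4 ^ j) by (apply pow_lt; lra). nra.
    + unfold lam. rewrite E4.
      replace (2 * (4 * 4 ^ S j) * Lam / (4 ^ S j * (s / INR m))) with (8 * (Lam * INR m) / s) by (field; lra).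
      rewrite <- Hs2.
      replace (2 * (4 ^ S j * (s / INR m)) * (3 * (/ 2) ^ S j) ^ 2 * INR m) with (18 * s * ((/2) ^ S j * (/2) ^ S j * 4 ^ S j)) by (field; lra).
      rewrite Hh4. replace (8 * (s * s) / s) with (8 * s) by (field; lra). lra.
Qed.
Section Lists.
Context {X : Type}.
Fixpoint lists_upto (A : list X) (M : nat) : list (list X) :=
  match M with
  | O => [[]]
  | S M' => [] :: flat_map (fun a => map (cons a) (lists_upto A M')) A
  end.
Lemma in_lists_upto A M l : (length l <= M)%nat -> (forall a, In a l -> In a A) -> In l (lists_upto A M).
Proof. revert l; induction M; intros l Hl HA; simpl.
  - destruct l; simpl in *; [auto| lia].
  - destruct l as [|a l]; [left; auto| right]. apply in_flat_map. exists a. split. apply HA; simpl; auto.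
    apply in_map. apply IHM. simpl in Hl; lia. intros; apply HA; simpl; auto. Qed.
Lemma length_flat_cons (A : list X) (Ls : list (list X)) : length (flat_map (fun a => map (cons a) Ls) A) = (length A * length Ls)%nat.
Proof. induction A; simpl; auto. rewrite length_app, length_map, IHA. auto. Qed.
Lemma length_lists_upto A M : (length (lists_upto A M) <= (length A + 1) ^ M)%nat.
Proof. induction M; simpl; auto. rewrite length_flat_cons.
  assert (0 < (length A + 1) ^ M)%nat by (apply Nat.neq_0_lt_0, Nat.pow_nonzero; lia).
  nia. Qed.
End Lists.

Fixpoint lk (t : nat) (I : list (nat * nat)) : option nat :=
  match I with
  | nil => None
  | (s, q) :: I' => if Nat.eqb s t then Some q else lk t I'
  end.
Lemma lk_app t I1 I2 : lk t (I1 ++ I2) = match lk t I1 with Some q => Some q | None => lk t I2 end.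
Proof. induction I1 as [|[s q] I1 IH]; simpl; auto. destruct (Nat.eqb s t); auto. Qed.

Definition dist2 (d : nat) (w w' : vec) := fsum d (fun j => (w j - w' j) ^ 2).

Definition step (d : nat) (delta : R) (w x : vec) (o : option nat) : vec :=
  match o with
  | None => w
  | Some q =>
      let z := dot d w x in
      let y' := INR q * delta in
      let c := Rmin (y' + delta) (if Rle_dec (y' - delta) 0 then z else Rmax (y' - delta) z) in
      fun j => w j - (z - c) * x j
  end.

Fixpoint st (d : nat) (delta : R) (xt : list bool -> vec) (D : nat -> option nat) (u : list bool) (t : nat) : vec :=
  match t with
  | O => fun _ => 0
  | S s => step d delta (st d delta xt D u s) (xt (firstn s u)) (D s)
  end.

Definition cv (d : nat) (delta : R) (xt : list bool -> vec) (D : nat -> option nat) (u : list bool) : R :=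
  match D (length u) with
  | Some q => INR q * delta
  | None => Rmax 0 (dot d (st d delta xt D u (length u)) (xt u))
  end.

Definition covL d delta xt m M G : list (list bool -> R) :=
  map (fun I => cv d delta xt (fun t => lk t I)) (lists_upto (list_prod (seq 0 m) (seq 0 G)) M).

Lemma dist2_step d w w' x th :
  dist2 d (fun j => w j - th * x j) w' = dist2 d w w' - 2 * th * (dot d w x - dot d w' x) + th ^ 2 * sq d x.
Proof. unfold dist2, dot, sq. induction d; cbn [fsum]; [ring| rewrite IHd; ring]. Qed.

Lemma step_decrease d delta w wst x q :
  0 < delta -> sq d x <= 1 ->
  Rabs (INR q * delta - Rmax 0 (dot d wst x)) <= delta ->
  exists th, dist2 d (step d delta w x (Some q)) wst <= dist2 d w wst - th ^ 2 /\
    (4 * delta < Rabs (Rmax 0 (dot d w x) - Rmax 0 (dot d wst x)) -> 2 * delta <= Rabs th).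
Proof.
  intros Hd Hx Hq. simpl.
  set (z := dot d w x). set (zs := dot d wst x). set (y' := INR q * delta).
  set (c := Rmin (y' + delta) (if Rle_dec (y' - delta) 0 then z else Rmax (y' - delta) z)).
  exists (z - c). rewrite dist2_step. fold z zs.
  apply Rabs_le_inv in Hq. fold y' zs in Hq.
  assert (Hsx : 0 <= sq d x) by (apply fsum_nonneg; intros; apply pow2_ge_0).
  assert (Key : (z - c) * (z - zs) >= (z - c) ^ 2).
  { unfold c, Rmin, Rmax in *. repeat destruct Rle_dec; try nra. }
  split.
  - assert (0 <= (z - c) ^ 2) by apply pow2_ge_0. nra.
  - intros Hm. unfold c, Rmin, Rmax in *. clear Key.
    revert Hm Hq. unfold Rabs. repeat destruct Rle_dec; repeat destruct Rcase_abs; intros; lra.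
Qed.
Definition rnd (delta y : R) : nat := Z.to_nat (up (y / delta)).
Lemma rnd_spec delta y : 0 < delta -> 0 <= y <= 1 ->
  Rabs (INR (rnd delta y) * delta - y) <= delta /\ INR (rnd delta y) <= 1 / delta + 1.
Proof. intros Hd Hy. unfold rnd. destruct (archimed (y / delta)) as [H1 H2].
  assert (0 <= y / delta) by (unfold Rdiv; apply Rmult_le_pos; [lra| left; apply Rinv_0_lt_compat; lra]).
  assert (Hz : (0 < up (y / delta))%Z) by (apply lt_0_IZR; lra).
  rewrite INR_IZR_INZ, Z2Nat.id by lia.
  assert (y / delta <= 1 / delta) by (apply Rmult_le_compat_r; [left; apply Rinv_0_lt_compat|]; lra).
  split; [|lra]. apply Rabs_le.
  assert (IZR (up (y / delta)) * delta > y).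
  { apply Rmult_gt_compat_r with (r := delta) in H1; [|lra]. unfold Rdiv in H1. rewrite Rmult_assoc, Rinv_l, Rmult_1_r in H1 by lra. lra. }
  assert (IZR (up (y / delta)) * delta <= y + delta).
  { assert (IZR (up (y / delta)) <= y / delta + 1) by lra.
    apply Rmult_le_compat_r with (r := delta) in H4; [|lra]. unfold Rdiv in H4.
    replace ((y * / delta + 1) * delta) with (y + delta) in H4 by (field; lra). lra. }
  lra. Qed.

Section Truth.
Variables (d : nat) (delta gam : R) (x : nat -> vec) (y : nat -> R).
Definition tdec (w : vec) (s : nat) : option nat :=
  if Rlt_dec gam (Rabs (Rmax 0 (dot d w (x s)) - y s)) then Some (rnd delta (y s)) else None.
Fixpoint tst (s : nat) : vec :=
  match s with
  | O => fun _ => 0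
  | S s' => step d delta (tst s') (x s') (tdec (tst s') s')
  end.
Fixpoint evs (n : nat) : list (nat * nat) :=
  match n with
  | O => []
  | S n' => evs n' ++ match tdec (tst n') n' with Some q => [(n', q)] | None => [] end
  end.
Lemma lk_evs t n : lk t (evs n) = if Nat.ltb t n then tdec (tst t) t else None.
Proof. induction n; simpl; auto. rewrite lk_app, IHn.
  destruct (Nat.ltb_spec t n); destruct (Nat.ltb_spec t (S n)); try lia.
  - destruct (tdec (tst t) t); auto. destruct (tdec (tst n) n); simpl; auto.
    destruct (Nat.eqb_spec n t); [lia|auto].
  - assert (t = n) by lia. subst. destruct (tdec (tst n) n); simpl; auto. rewrite Nat.eqb_refl; auto.
  - destruct (tdec (tst n) n); simpl; auto. destruct (Nat.eqb_spec n t); [lia|auto]. Qed.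
Lemma in_evs s q n : In (s, q) (evs n) -> (s < n)%nat /\ tdec (tst s) s = Some q.
Proof. induction n; simpl; [tauto|]. intros H. apply in_app_or in H. destruct H as [H|H].
  destruct (IHn H); split; auto; lia.
  destruct (tdec (tst n) n) eqn:E; simpl in H; [|tauto]. destruct H as [H|H]; [|tauto]. inversion H; subst. auto. Qed.
End Truth.

Lemma potential d delta gam x wst n :
  0 < delta -> gam = 4 * delta -> sq d wst <= 1 -> (forall s, (s < n)%nat -> sq d (x s) <= 1) ->
  dist2 d (tst d delta gam x (fun s => Rmax 0 (dot d wst (x s))) n) wst <=
    1 - 4 * delta ^ 2 * INR (length (evs d delta gam x (fun s => Rmax 0 (dot d wst (x s))) n)).
Proof. intros Hd Hg Hw Hx. induction n.
  - simpl. unfold dist2. rewrite (fsum_ext d _ (fun j => wst j ^ 2)) by (intros; ring). fold (sq d wst). lra.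
  - simpl evs. rewrite length_app. simpl tst.
    set (y := fun s => Rmax 0 (dot d wst (x s))) in *.
    set (w := tst d delta gam x y n) in *.
    assert (IH := IHn ltac:(intros; apply Hx; lia)).
    assert (Hy : 0 <= y n <= 1).
    { unfold y. pose proof (dot_bound d wst (x n) Hw (Hx n ltac:(lia))). apply Rabs_le_inv in H.
      unfold Rmax; destruct Rle_dec; lra. }
    unfold tdec. destruct Rlt_dec as [Hm|Hm].
    + destruct (rnd_spec delta (y n) Hd Hy) as [Hr _].
      destruct (step_decrease d delta w wst (x n) (rnd delta (y n)) Hd (Hx n ltac:(lia)) Hr) as [th [H1 H2]].
      assert (2 * delta <= Rabs th) by (apply H2; subst gam; apply Hm).
      assert (4 * delta ^ 2 <= th ^ 2). { rewrite <- (pow2_abs th). assert (0 <= 2 * delta) by lra. nra. }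
      simpl length. rewrite plus_INR. simpl INR. lra.
    + simpl length. rewrite Nat.add_0_r. simpl. auto. Qed.

Lemma cover_exists d xt m M G gam wst b :
  0 < gam -> (forall u, (length u < m)%nat -> sq d (xt u) <= 1) -> sq d wst <= 1 -> length b = m ->
  4 <= INR M * gam ^ 2 -> 4 / gam + 1 < INR G ->
  exists v, In v (covL d (gam / 4) xt m M G) /\
    forall t, (t < m)%nat -> Rabs (v (firstn t b) - Rmax 0 (dot d wst (xt (firstn t b)))) <= gam.
Proof.
  intros Hg Hxt Hw Hb HM HG.
  set (delta := gam / 4).
  assert (Hd : 0 < delta) by (unfold delta; lra).
  set (x := fun s => xt (firstn s b)).
  set (y := fun s => Rmax 0 (dot d wst (x s))).
  assert (Hx : forall s, (s < m)%nat -> sq d (x s) <= 1).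
  { intros s Hs. apply Hxt. rewrite length_firstn. lia. }
  assert (Hy : forall s, (s < m)%nat -> 0 <= y s <= 1).
  { intros s Hs. unfold y. pose proof (dot_bound d wst (x s) Hw (Hx s Hs)). apply Rabs_le_inv in H.
    unfold Rmax; destruct Rle_dec; lra. }
  set (I := evs d delta gam x y m).
  set (D := fun t => lk t I).
  exists (cv d delta xt D). split.
  - unfold covL. apply (in_map (fun I => cv d delta xt (fun t => lk t I)) _ I). apply in_lists_upto.
    + pose proof (potential d delta gam x wst m Hd ltac:(unfold delta; lra) Hw Hx) as P.
      fold y in P. fold I in P.
      assert (0 <= dist2 d (tst d delta gam x y m) wst) by (apply fsum_nonneg; intros; apply pow2_ge_0).
      apply INR_le. assert (delta ^ 2 * 4 = gam ^ 2 / 4) by (unfold delta; field).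
      assert (0 < gam ^ 2) by (apply pow_lt; lra).
      assert (INR (length I) * gam ^ 2 <= INR M * gam ^ 2) by nra.
      apply Rmult_le_reg_r with (gam ^ 2); auto.
    + intros [s q] Hin. apply in_evs in Hin. destruct Hin as [Hs Hq].
      unfold tdec in Hq. destruct Rlt_dec; [|discriminate]. inversion Hq; subst q.
      apply in_prod; apply in_seq; split; try lia.
      destruct (rnd_spec delta (y s) Hd (Hy s Hs)) as [_ Hr].
      apply INR_lt. simpl. unfold delta in *.
      replace (1 / (gam / 4)) with (4 / gam) in Hr by (field; lra). lra.
  - intros t Ht.
    assert (Hst : forall s, (s <= t)%nat -> st d delta xt D (firstn t b) s = tst d delta gam x y s).
    { induction s; intros Hs; simpl; auto. rewrite IHs by lia.
      rewrite firstn_firstn, Nat.min_l by lia. unfold D, I. rewrite lk_evs.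
      destruct (Nat.ltb_spec s m); [|lia]. auto. }
    unfold cv. rewrite length_firstn, Nat.min_l by lia.
    unfold D at 1, I. rewrite lk_evs. destruct (Nat.ltb_spec t m); [|lia].
    unfold tdec at 1. destruct Rlt_dec as [Hm|Hm].
    + destruct (rnd_spec delta (y t) Hd (Hy t Ht)) as [Hr _]. unfold y, x in *. unfold delta in *. lra.
    + rewrite Hst by lia. fold (x t). fold (y t). apply Rnot_lt_le in Hm. auto.
Qed.
Definition covPM d xt m j : list (list bool -> R) :=
  let C := covL d ((/2) ^ j / 4) xt m (4 ^ S j) (2 ^ (j + 2) + 2) in C ++ map (fun v u => - v u) C.

Definition LamOf (m : nat) : R := ln (2 * (INR m * (2 ^ (S (Nat.log2 m) + 2) + 2) + 1)).

Lemma relu_bound d w x : sq d w <= 1 -> sq d x <= 1 -> Rabs (Rmax 0 (dot d w x)) <= 1.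
Proof. intros Hw Hx. pose proof (dot_bound d w x Hw Hx). apply Rabs_le_inv in H. apply Rabs_le. unfold Rmax; destruct Rle_dec; lra. Qed.

Lemma unit_rad d xt m (sig : list bool -> R) (wsel : list bool -> vec) :
  (1 <= m)%nat -> (forall u, (length u < m)%nat -> sq d (xt u) <= 1) ->
  (forall b, sig b = 1 \/ sig b = -1) -> (forall b, sq d (wsel b) <= 1) ->
  AV m (fun b => PS m (fun u => sig b * Rmax 0 (dot d (wsel b) (xt u))) b)
    <= 1 + INR (S (Nat.log2 m)) * (26 * sqrt (LamOf m * INR m)).
Proof.
  intros Hm Hxt Hsig Hw.
  set (L := S (Nat.log2 m)).
  assert (Hm' : 1 <= INR m) by (apply (le_INR 1); lia).
  assert (HLam : 0 < LamOf m).
  { unfold LamOf. rewrite <- ln_1. apply ln_increasing; [lra|].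
    assert (0 < 2 ^ (S (Nat.log2 m) + 2)) by (apply pow_lt; lra). nra. }
  assert (HmL : INR m * (/2) ^ L <= 1).
  { destruct (Nat.log2_spec m ltac:(lia)) as [_ H2].
    assert (INR m < 2 ^ L). { unfold L. replace 2 with (INR 2) by (simpl; lra). rewrite <- pow_INR. apply lt_INR. simpl in H2 |- *. lia. }
    assert (0 < (/2) ^ L) by (apply pow_lt; lra).
    assert (2 ^ L * (/2) ^ L = 1). { rewrite <- Rpow_mult_distr. rewrite Rinv_r by lra. apply pow1. }
    nra. }
  eapply Rle_trans.
  apply (chaining m L (fun b u => sig b * Rmax 0 (dot d (wsel b) (xt u))) (covPM d xt m) (LamOf m) Hm HLam).
  - intros b Hb t Ht. rewrite Rabs_mult. destruct (Hsig b) as [E|E]; rewrite E;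
    [rewrite Rabs_R1| replace (Rabs (-1)) with 1 by (unfold Rabs; destruct Rcase_abs; lra)]; rewrite Rmult_1_l; apply relu_bound; auto;
    apply Hxt; rewrite length_firstn; lia.
  - intros j Hj b Hb.
    assert (Hg : 0 < (/2) ^ j) by (apply pow_lt; lra).
    destruct (cover_exists d xt m (4 ^ S j) (2 ^ (j + 2) + 2) ((/2) ^ j) (wsel b) b Hg Hxt (Hw b) Hb) as [v [Hin Hv]].
    + rewrite pow_INR. simpl INR. replace (1 + 1 + 1 + 1) with 4 by ring.
      rewrite <- (Rmult_1_r 4) at 1. simpl pow at 1. rewrite Rmult_assoc. apply Rmult_le_compat_l; [lra|].
      right. rewrite <- pow_half_4 with (j := j). ring.
    + rewrite plus_INR, pow_INR. simpl INR.
      replace (1 + 1) with 2 by ring. rewrite pow_add.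
      assert (4 / (/2) ^ j = 2 ^ j * 2 ^ 2).
      { rewrite pow_inv. unfold Rdiv. rewrite Rinv_inv. simpl. ring. }
      lra.
    + destruct (Hsig b) as [E|E].
      * exists v. split. unfold covPM. apply in_or_app; left; auto.
        intros t Ht. rewrite E, Rmult_1_l. apply Hv; auto.
      * exists (fun u => - v u). split. unfold covPM. apply in_or_app; right. apply (in_map (fun v u => - v u)). auto.
        intros t Ht. rewrite E. replace (- v (firstn t b) - -1 * Rmax 0 (dot d (wsel b) (xt (firstn t b))))
          with (- (v (firstn t b) - Rmax 0 (dot d (wsel b) (xt (firstn t b))))) by ring.
        rewrite Rabs_Ropp. apply Hv; auto.
  - intros j Hj. unfold covPM. cbv zeta. rewrite length_app, length_map.
    set (C := covL d ((/ 2) ^ j / 4) xt m (4 ^ S j) (2 ^ (j + 2) + 2)).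
    set (A := list_prod (seq 0 m) (seq 0 (2 ^ (j + 2) + 2))).
    assert (HC : (length C <= (length A + 1) ^ (4 ^ S j))%nat).
    { unfold C, covL. rewrite length_map. apply length_lists_upto. }
    assert (HA : length A = (m * (2 ^ (j + 2) + 2))%nat) by (unfold A; rewrite length_prod, !length_seq; auto).
    assert (HK : 1 <= 4 ^ S j) by (apply pow_R1_Rle; lra).
    assert (HLam' : 0 <= LamOf m) by lra.
    destruct (Nat.eq_dec (length C) 0) as [E|E].
    { rewrite E. replace (INR (0 + 0)) with 0 by (simpl; ring). unfold ln. destruct Rlt_dec as [h|h]; [exfalso; apply (Rlt_irrefl 0 h)|]. nra. }
    rewrite plus_INR. replace (INR (length C) + INR (length C)) with (2 * INR (length C)) by ring.
    assert (0 < INR (length C)) by (apply lt_0_INR; lia).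
    rewrite ln_mult by lra.
    assert (Ha : 1 <= INR (length A + 1)) by (rewrite plus_INR; simpl; pose proof (pos_INR (length A)); lra).
    assert (ln (INR (length C)) <= 4 ^ S j * ln (INR (length A + 1))).
    { eapply Rle_trans. apply ln_le; [auto| apply le_INR; apply HC].
      rewrite pow_INR, ln_pow by lra. rewrite pow_INR. simpl INR. right. f_equal. f_equal. ring. }
    assert (0 <= ln (INR (length A + 1))) by (rewrite <- ln_1; apply ln_le; lra).
    assert (0 < ln 2) by (rewrite <- ln_1; apply ln_increasing; lra).
    assert (ln (INR (length A + 1)) + ln 2 <= LamOf m).
    { unfold LamOf. rewrite Rplus_comm, <- ln_mult by lra. apply ln_le; [lra|].
      apply Rmult_le_compat_l; [lra|]. rewrite plus_INR, HA, mult_INR, plus_INR, pow_INR. simpl INR.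
      apply Rplus_le_compat_r. apply Rmult_le_compat_l; [apply pos_INR|].
      replace (1 + 1) with 2 by ring. apply Rplus_le_compat_r. apply Rle_pow; [lra|]. unfold L in Hj; lia. }
    nra.
  - lra.
Qed.
Lemma clip_bounds z : -1 <= clip z <= 1.
Proof. unfold clip, Rmax, Rmin. repeat destruct Rle_dec; lra. Qed.
Lemma clip_up g s a : 0 < a -> -1 + a <= s -> clip g >= s + a -> g >= s + a.
Proof. unfold clip, Rmax, Rmin. repeat destruct Rle_dec; lra. Qed.
Lemma clip_dn g s a : 0 < a -> s <= 1 - a -> clip g <= s - a -> g <= s - a.
Proof. unfold clip, Rmax, Rmin. repeat destruct Rle_dec; lra. Qed.

Lemma firstn_app_exact (u w : list bool) : firstn (length u) (u ++ w) = u.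
Proof. rewrite firstn_app, Nat.sub_diag, firstn_O, app_nil_r, firstn_all. auto. Qed.
Lemma nth_app_exact (u w : list bool) c : nth (length u) (u ++ c :: w) false = c.
Proof. rewrite app_nth2 by lia. rewrite Nat.sub_diag. auto. Qed.

Definition gnet (d k : nat) (a : nat -> R) (w : nat -> vec) (x : vec) : R :=
  fsum k (fun j => a j * Rmax 0 (dot d (w j) x)).

Lemma shatter_bound d k alpha m xt st :
  (1 <= k)%nat -> 0 < alpha -> (1 <= m)%nat -> seq_shattered d (inH k d) alpha m xt st ->
  INR m * alpha <= INR k * (1 + INR (S (Nat.log2 m)) * (26 * sqrt (LamOf m * INR m))).
Proof.
  intros Hk Ha Hm [HX Hsh].
  assert (Hx : forall u, (length u < m)%nat -> sq d (xt u) <= 1) by (intros u Hu; apply norm2_sq, (HX u Hu)).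
  assert (Hs : forall u, (length u < m)%nat -> -1 + alpha <= st u <= 1 - alpha).
  { intros u Hu. split.
    - set (b := u ++ false :: repeat false (m - length u - 1)).
      assert (Hb : length b = m) by (unfold b; rewrite length_app; simpl; rewrite repeat_length; lia).
      destruct (Hsh b Hb) as [f [Hf Hft]]. specialize (Hft (length u) Hu). cbv zeta in Hft.
      unfold b in Hft. rewrite nth_app_exact, firstn_app_exact in Hft.
      destruct Hf as [a [w [_ Hf]]]. rewrite Hf in Hft. pose proof (clip_bounds (fsum k (fun j => a j * Rmax 0 (dot d (w j) (xt u))))). lra.
    - set (b := u ++ true :: repeat false (m - length u - 1)).
      assert (Hb : length b = m) by (unfold b; rewrite length_app; simpl; rewrite repeat_length; lia).
      destruct (Hsh b Hb) as [f [Hf Hft]]. specialize (Hft (length u) Hu). cbv zeta in Hft.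
      unfold b in Hft. rewrite nth_app_exact, firstn_app_exact in Hft.
      destruct Hf as [a [w [_ Hf]]]. rewrite Hf in Hft. pose proof (clip_bounds (fsum k (fun j => a j * Rmax 0 (dot d (w j) (xt u))))). lra. }
  assert (Hch : forall b : list bool, exists aw : (nat -> R) * (nat -> vec),
     (forall j, (j < k)%nat -> -1 <= fst aw j <= 1 /\ sq d (snd aw j) <= 1) /\
     (length b = m -> forall t, (t < m)%nat ->
        if nth t b false then clip (gnet d k (fst aw) (snd aw) (xt (firstn t b))) >= st (firstn t b) + alpha
        else clip (gnet d k (fst aw) (snd aw) (xt (firstn t b))) <= st (firstn t b) - alpha)).
  { intros b. destruct (Nat.eq_dec (length b) m) as [Hb|Hb].
    - destruct (Hsh b Hb) as [f [[a [w [Hn Hf]]] Hft]]. exists (a, w). simpl. split.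
      + intros j Hj. destruct (Hn j Hj); split; auto. apply norm2_sq; auto.
      + intros _ t Ht. specialize (Hft t Ht). cbv zeta in Hft. rewrite Hf in Hft. exact Hft.
    - exists (fun _ => 0, fun _ _ => 0). simpl. split.
      + intros; split; [lra|]. unfold sq. rewrite (fsum_ext d _ (fun _ => 0)) by (intros; ring). rewrite fsum_const. lra.
      + intros; lia. }
  apply choice_cid in Hch. destruct Hch as [aw Haw].
  set (a := fun b => fst (aw b)). set (w := fun b => snd (aw b)).
  set (P := fun j b => PS m (fun u => Rmax 0 (dot d (w b j) (xt u))) b).
  set (sg := fun j b => if Rle_dec 0 (P j b) then 1 else -1).
  assert (Hlow : INR m * alpha <= AV m (fun b => PS m (fun u => gnet d k (a b) (w b) (xt u)) b)).
  { assert (E : AV m (fun b => PS m (fun u => gnet d k (a b) (w b) (xt u)) b) =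
       AV m (fun b => PS m (fun u => gnet d k (a b) (w b) (xt u) - st u) b) + AV m (PS m st)).
    { rewrite <- AV_plus. apply AV_eq. intros; rewrite PS_minus; ring. }
    rewrite E, AV_PS_zero, Rplus_0_r. rewrite <- (AV_const m (INR m * alpha)).
    apply AV_le. intros b Hb. unfold PS. rewrite <- fsum_const. apply fsum_le. intros t Ht.
    destruct (Haw b) as [_ H]. specialize (H Hb t Ht).
    assert (Hl : (length (firstn t b) < m)%nat) by (rewrite length_firstn; lia).
    destruct (Hs _ Hl). unfold a, w.
    destruct (nth t b false); simpl.
    - apply clip_up in H; auto. lra.
    - apply clip_dn in H; auto. lra. }
  assert (Hup : forall b, length b = m -> PS m (fun u => gnet d k (a b) (w b) (xt u)) b <=
        fsum k (fun j => PS m (fun u => sg j b * Rmax 0 (dot d (w b j) (xt u))) b)).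
  { intros b Hb. unfold PS at 1, gnet.
    rewrite (fsum_ext m _ (fun t => fsum k (fun j => a b j * (eps (nth t b false) * Rmax 0 (dot d (w b j) (xt (firstn t b)))))))
      by (intros; rewrite <- fsum_scal; apply fsum_ext; intros; ring).
    rewrite fsum_swap. apply fsum_le. intros j Hj. rewrite fsum_scal.
    fold (PS m (fun u => Rmax 0 (dot d (w b j) (xt u))) b). fold (P j b).
    unfold PS. rewrite (fsum_ext m _ (fun t => sg j b * (eps (nth t b false) * Rmax 0 (dot d (w b j) (xt (firstn t b))))))
      by (intros; ring).
    rewrite fsum_scal. fold (PS m (fun u => Rmax 0 (dot d (w b j) (xt u))) b). fold (P j b).
    destruct (Haw b) as [H _]. destruct (H j Hj) as [Ha1 _]. unfold a in *.
    unfold sg. destruct Rle_dec; nra. }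
  eapply Rle_trans; [apply Hlow|].
  eapply Rle_trans; [apply (AV_le m _ _ Hup)|]. rewrite AV_fsum.
  rewrite <- (fsum_const k). apply fsum_le. intros j Hj.
  apply unit_rad; auto.
  - intros b. unfold sg. destruct Rle_dec; auto.
  - intros b. destruct (Haw b) as [H _]. apply (H j Hj).
Qed.
Lemma ln2_bounds : / 2 < ln 2 /\ ln 2 < 1.
Proof. split. apply ln_lt_2. rewrite <- ln_exp with 1. apply ln_increasing; [lra|].
  pose proof (exp_ineq1 1 ltac:(lra)). lra. Qed.

Lemma stepA m : (1 <= m)%nat ->
  1 + INR (S (Nat.log2 m)) * (26 * sqrt (LamOf m * INR m)) <= 280 * ln (INR m + 1) * sqrt (ln (INR m + 1) * INR m).
Proof.
  intros Hm. set (l := ln (INR m + 1)).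
  assert (Hm' : 1 <= INR m) by (apply (le_INR 1); lia).
  destruct ln2_bounds as [Hl2a Hl2b].
  assert (Hl : ln 2 <= l) by (apply ln_le; lra).
  destruct (Nat.log2_spec m ltac:(lia)) as [H1 _].
  set (p := Nat.log2 m) in *.
  assert (Hp : 2 ^ p <= INR m).
  { replace 2 with (INR 2) by (simpl; lra). rewrite <- pow_INR. apply le_INR. auto. }
  assert (Hp0 : 0 < 2 ^ p) by (apply pow_lt; lra).
  assert (HLc : INR (S p) <= 4 * l).
  { rewrite S_INR. assert (INR p * ln 2 <= l).
    { rewrite <- (ln_pow 2 ltac:(lra) p). apply ln_le; auto. lra. }
    assert (INR p <= 2 * l) by nra. lra. }
  assert (HLam : LamOf m <= 7 * l).
  { unfold LamOf. fold p. replace (2 ^ (S p + 2)) with (8 * 2 ^ p) by (rewrite pow_add; simpl; ring).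
    apply Rle_trans with (ln (22 * (INR m + 1) ^ 2)).
    { apply ln_le. nra. nra. }
    rewrite ln_mult by (try apply pow_lt; lra). rewrite ln_pow by lra. simpl INR. fold l.
    assert (ln 22 <= 5 * ln 2).
    { replace 5 with (INR 5) by (simpl; ring). rewrite <- (ln_pow 2 ltac:(lra) 5). apply ln_le; simpl; lra. }
    lra. }
  assert (HL : 0 < LamOf m).
  { unfold LamOf. rewrite <- ln_1. apply ln_increasing; [lra|].
    assert (0 < 2 ^ (S (Nat.log2 m) + 2)) by (apply pow_lt; lra). nra. }
  assert (Hs : sqrt (LamOf m * INR m) <= 265 / 100 * sqrt (l * INR m)).
  { rewrite <- (sqrt_square (265/100)) by lra. rewrite <- sqrt_mult by nra.
    apply sqrt_le_1_alt. nra. }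
  assert (Hsq : 0 <= sqrt (l * INR m)) by apply sqrt_pos.
  assert (Hsq2 : sqrt (l * INR m) * sqrt (l * INR m) = l * INR m) by (apply sqrt_sqrt; nra).
  assert (H1' : 1 <= 3 * l * sqrt (l * INR m)).
  { assert ((l * sqrt (l * INR m)) ^ 2 >= 1 / 8).
    { replace ((l * sqrt (l * INR m)) ^ 2) with (l * l * (sqrt (l * INR m) * sqrt (l * INR m))) by ring.
      rewrite Hsq2. assert (l * l >= 1/4) by nra. nra. }
    assert (0 <= l * sqrt (l * INR m)) by nra. nra. }
  assert (INR (S p) * (26 * sqrt (LamOf m * INR m)) <= 4 * l * (26 * (265 / 100 * sqrt (l * INR m)))).
  { apply Rmult_le_compat; try apply pos_INR; auto. apply Rmult_le_pos; [lra| apply sqrt_pos]. lra. }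
  nra.
Qed.

Lemma solve_implicit B m : 0 < B -> 0 <= m -> m <= B * ln (m + 1) ^ 3 -> m <= 64 * B * ln (64 * B + 1) ^ 3.
Proof.
  intros HB Hm H. set (n := m + 1). set (r := sqrt (sqrt n)).
  assert (Hn : 1 <= n) by (unfold n; lra).
  assert (Hsn : 1 <= sqrt n) by (rewrite <- sqrt_1; apply sqrt_le_1_alt; lra).
  assert (Hr : 1 <= r) by (unfold r; rewrite <- sqrt_1; apply sqrt_le_1_alt; lra).
  assert (Hr4 : r ^ 4 = n).
  { unfold r. replace (sqrt (sqrt n) ^ 4) with ((sqrt (sqrt n) * sqrt (sqrt n)) * (sqrt (sqrt n) * sqrt (sqrt n))) by ring.
    rewrite sqrt_sqrt by lra. apply sqrt_sqrt; lra. }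
  assert (Hln : ln n = 4 * ln r) by (rewrite <- Hr4, ln_pow by lra; simpl; ring).
  assert (Hlr : 0 <= ln r) by (rewrite <- ln_1; apply ln_le; lra).
  assert (Hlr2 : ln r <= r) by (pose proof (ln_le_id r ltac:(lra)); lra).
  assert (Hr3 : n <= (64 * B + 1) * r ^ 3).
  { fold n in H. rewrite Hln in H.
    assert (ln r ^ 3 <= r ^ 3) by (apply pow_incr; lra).
    assert (1 <= r ^ 3) by (apply pow_R1_Rle; lra).
    unfold n at 1. nra. }
  assert (Hrb : r <= 64 * B + 1).
  { rewrite <- Hr4 in Hr3. assert (0 < r ^ 3) by (apply pow_lt; lra).
    replace (r ^ 4) with (r * r ^ 3) in Hr3 by ring. nra. }
  assert (ln r <= ln (64 * B + 1)) by (apply ln_le; lra).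
  fold n in H. rewrite Hln in H.
  assert (ln r ^ 3 <= ln (64 * B + 1) ^ 3) by (apply pow_incr; lra).
  nra.
Qed.
Theorem propositionC4 :
  exists C : R, C > 0 /\
    forall (d k : nat) (alpha : R),
      (1 <= d)%nat -> (1 <= k)%nat -> 0 < alpha <= 1 ->
      fat_le d (inH k d) alpha
        (C * INR k ^ 2 / alpha ^ 2 * (ln (exp 1 * INR k / alpha)) ^ 3).
Proof.
  set (K := 280).
  set (c0 := ln (64 * K ^ 2 + 1)).
  assert (Hc0 : 0 <= c0) by (unfold c0; rewrite <- ln_1; apply ln_le; unfold K; lra).
  exists (64 * K ^ 2 * (c0 + 2) ^ 3). split.
  { unfold K. assert (0 < (c0 + 2) ^ 3) by (apply pow_lt; lra). nra. }
  intros d k alpha Hd Hk [Ha0 Ha1] m xt st Hsh. unfold K in *.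
  assert (Hk' : 1 <= INR k) by (apply (le_INR 1); lia).
  set (z := INR k / alpha).
  assert (Hz : 1 <= z) by (unfold z; apply (Rmult_le_reg_r alpha); auto; unfold Rdiv; rewrite Rmult_assoc, Rinv_l, Rmult_1_r by lra; nra).
  assert (Hez : ln (exp 1 * INR k / alpha) = 1 + ln z).
  { replace (exp 1 * INR k / alpha) with (exp 1 * z) by (unfold z; field; lra).
    rewrite ln_mult by (try apply exp_pos; lra). rewrite ln_exp. auto. }
  assert (Hlz : 0 <= ln z) by (rewrite <- ln_1; apply ln_le; lra).
  rewrite Hez.
  assert (Hkz : INR k ^ 2 / alpha ^ 2 = z ^ 2) by (unfold z; field; lra).
  assert (HRHS : 0 <= 64 * 280 ^ 2 * (c0 + 2) ^ 3 * INR k ^ 2 / alpha ^ 2 * (1 + ln z) ^ 3).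
  { unfold Rdiv. rewrite Rmult_assoc with (r2 := INR k ^ 2). fold (INR k ^ 2 / alpha ^ 2). rewrite Hkz.
    assert (0 <= (c0 + 2) ^ 3) by (apply pow_le; lra). assert (0 <= (1 + ln z) ^ 3) by (apply pow_le; lra).
    assert (0 <= z ^ 2) by apply pow2_ge_0. apply Rmult_le_pos; [|lra].
    apply Rmult_le_pos; [|lra]. nra. }
  destruct m as [|m']. { simpl INR. lra. }
  set (m := S m') in *.
  assert (Hm : (1 <= m)%nat) by (unfold m; lia).
  assert (Hm' : 1 <= INR m) by (apply (le_INR 1); lia).
  pose proof (shatter_bound d k alpha m xt st Hk Ha0 Hm Hsh) as H1.
  pose proof (stepA m Hm) as H2.
  set (l := ln (INR m + 1)) in *.
  set (q := sqrt (l * INR m)) in *.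
  assert (Hl : 0 < l) by (unfold l; rewrite <- ln_1; apply ln_increasing; lra).
  assert (Hq : 0 <= q) by apply sqrt_pos.
  assert (Hq2 : q * q = l * INR m) by (apply sqrt_sqrt; nra).
  assert (H3 : INR m * alpha <= 280 * INR k * l * q).
  { eapply Rle_trans; [apply H1|]. nra. }
  assert (H4 : INR m * alpha ^ 2 <= 280 ^ 2 * INR k ^ 2 * l ^ 3).
  { assert ((INR m * alpha) ^ 2 <= (280 * INR k * l * q) ^ 2) by (apply pow_incr; split; [nra| auto]).
    replace ((280 * INR k * l * q) ^ 2) with (280 ^ 2 * INR k ^ 2 * l ^ 2 * (q * q)) in H by ring.
    rewrite Hq2 in H.
    apply (Rmult_le_reg_l (INR m)); [lra|]. nra. }
  set (B := 280 ^ 2 * z ^ 2).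
  assert (HB : 0 < B) by (unfold B; assert (0 < z ^ 2) by (apply pow_lt; lra); nra).
  assert (H5 : INR m <= B * l ^ 3).
  { unfold B. rewrite <- Hkz. apply (Rmult_le_reg_r (alpha ^ 2)); [apply pow_lt; lra|].
    replace (280 ^ 2 * (INR k ^ 2 / alpha ^ 2) * l ^ 3 * alpha ^ 2) with (280 ^ 2 * INR k ^ 2 * l ^ 3) by (field; lra). lra. }
  pose proof (solve_implicit B (INR m) HB ltac:(lra) H5) as H6.
  assert (H7 : ln (64 * B + 1) <= (c0 + 2) * (1 + ln z)).
  { apply Rle_trans with (ln ((64 * 280 ^ 2 + 1) * z ^ 2)).
    { apply ln_le; [lra|]. unfold B. assert (1 <= z ^ 2) by (apply pow_R1_Rle; lra). nra. }
    rewrite ln_mult by (try apply pow_lt; lra). rewrite ln_pow by lra. fold c0. simpl INR. nra. }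
  assert (H8 : ln (64 * B + 1) ^ 3 <= ((c0 + 2) * (1 + ln z)) ^ 3).
  { apply pow_incr. split; auto. rewrite <- ln_1. apply ln_le; lra. }
  replace (64 * 280 ^ 2 * (c0 + 2) ^ 3 * INR k ^ 2 / alpha ^ 2 * (1 + ln z) ^ 3)
    with (64 * B * ((c0 + 2) * (1 + ln z)) ^ 3) by (unfold B; rewrite <- Hkz; field; lra).
  eapply Rle_trans; [apply H6|]. apply Rmult_le_compat_l; lra.
Qed.
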